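(* Let $n\ge5$ and let $\varrho:H_n\to\mathcal L$ be a homomorphism. For $p\in\overline{\mathrm B}W$ put $p_0:=p$ and $p_i:=\varrho(r_i)p_{i-1}$ for $i=1,\dots,n$ (so $p_n=p_0$), and $\mathrm{Area}(p;\varrho):=\mathrm{Area}(p_1,p_2,\dots,p_n)$. Then $\mathrm{Area}(p;\varrho)$ does not depend on the choice of $p\in\overline{\mathrm B}W$. Moreover, if $\varrho(r_i)\ne1$ for all $i$, then $\mathrm{Area}(p;\varrho)\equiv n\pi\pmod{2\pi}$.
   Context: Let $W$ be a 2-dimensional complex vector space with a hermitian form $\langle\cdot,\cdot\rangle$ of signature $(+,-)$. In $\mathbb{CP}W$ let $\mathrm BW$ be the set of negative points (the Poincaré disc, with hyperbolic metric of curvature $-1$ and the orientation given by its complex structure), $\mathrm SW$ the set of isotropic points (its ideal boundary), and $\overline{\mathrm B}W=\mathrm BW\cup\mathrm SW$. Let $\mathcal L=\mathrm{PU}(W)$ be the group of orientation-preserving isometries of $\mathrm BW$ (it acts on $\overline{\mathrm B}W$). For $p_1,p_2,p_3\in\overline{\mathrm B}W$ the oriented area is $\mathrm{Area}\,\Delta(p_1,p_2,p_3)=2\arg\big(-\langle p_1,p_2\rangle\langle p_2,p_3\rangle\langle p_3,p_1\rangle\big)$ (with $\arg\in[-\pi,\pi]$, computed with any representatives in $W$) when no two vertices are equal isotropic points, and $0$ otherwise; it is the signed area of the geodesic triangle, positive for vertices in counterclockwise order. For $p_1,\dots,p_m\in\overline{\mathrm B}W$, $\mathrm{Area}(p_1,\dots,p_m):=\sum_{k=1}^m\mathrm{Area}\,\Delta(c,p_k,p_{k+1})$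 (indices mod $m$) for any $c\in\overline{\mathrm B}W$; this is independent of $c$. For $n\ge5$, $H_n$ is the group generated by $r_1,\dots,r_n$ with defining relations $r_i^2=1$ ($i=1,\dots,n$) and $r_nr_{n-1}\cdots r_2r_1=1$. *)

(* Defs.v *)
From Stdlib Require Import Reals List ZArith.
From Stdlib Require Import ClassicalDescription.
From Coquelicot Require Import Complex.
Open Scope R_scope.

(* Vectors of W = C^2 and 2x2 complex matrices. *)
Record vec := Vec { v1 : Complex.C; v2 : Complex.C }.
Record mat := Mat { m11 : Complex.C; m12 : Complex.C; m21 : Complex.C; m22 : Complex.C }.

Definition vzero : vec := Vec (RtoC 0) (RtoC 0).

Definition mv (M : mat) (u : vec) : vec :=
  Vec (Cplus (Cmult (m11 M) (v1 u)) (Cmult (m12 M) (v2 u)))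
      (Cplus (Cmult (m21 M) (v1 u)) (Cmult (m22 M) (v2 u))).

Definition mm (M N : mat) : mat :=
  Mat (Cplus (Cmult (m11 M) (m11 N)) (Cmult (m12 M) (m21 N)))
      (Cplus (Cmult (m11 M) (m12 N)) (Cmult (m12 M) (m22 N)))
      (Cplus (Cmult (m21 M) (m11 N)) (Cmult (m22 M) (m21 N)))
      (Cplus (Cmult (m21 M) (m12 N)) (Cmult (m22 M) (m22 N))).

Definition scalar_mat (l : Complex.C) : mat := Mat l (RtoC 0) (RtoC 0) l.
Definition is_scalar (M : mat) : Prop := exists l : Complex.C, M = scalar_mat l.

(* The hermitian form <u,v> = sum_{ij} u_i H_ij conj(v_j)  (linear in the first
   argument, antilinear in the second), given by its Gram matrix H. *)
Definition herm (H : mat) (u v : vec) : Complex.C :=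
  Cplus (Cplus (Cmult (Cmult (v1 u) (m11 H)) (Cconj (v1 v)))
               (Cmult (Cmult (v1 u) (m12 H)) (Cconj (v2 v))))
        (Cplus (Cmult (Cmult (v2 u) (m21 H)) (Cconj (v1 v)))
               (Cmult (Cmult (v2 u) (m22 H)) (Cconj (v2 v)))).

Definition hermitian_mat (H : mat) : Prop :=
  m11 H = Cconj (m11 H) /\ m22 H = Cconj (m22 H) /\ m21 H = Cconj (m12 H).

Definition signature_pm (H : mat) : Prop :=
  hermitian_mat H /\
  (exists u, Re (herm H u u) > 0) /\ (exists v, Re (herm H v v) < 0).

(* Points of CP W are represented by nonzero vectors. *)
Definition negative_pt (H : mat) (p : vec) : Prop := p <> vzero /\ Re (herm H p p) < 0.
Definition isotropic_pt (H : mat) (p : vec) : Prop := p <> vzero /\ herm H p p = RtoC 0.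
Definition closed_ball_pt (H : mat) (p : vec) : Prop :=
  negative_pt H p \/ isotropic_pt H p.

Definition same_point (p q : vec) : Prop :=
  exists l : Complex.C, l <> RtoC 0 /\ p = Vec (Cmult l (v1 q)) (Cmult l (v2 q)).

(* principal argument, with values in (-PI, PI]; arg 0 := 0 *)
Definition arg (z : Complex.C) : R :=
  let x := Re z in let y := Im z in
  if Rlt_dec 0 x then atan (y / x)
  else if Rlt_dec x 0 then
         (if Rle_dec 0 y then atan (y / x) + PI else atan (y / x) - PI)
  else if Rlt_dec 0 y then PI / 2
  else if Rlt_dec y 0 then - (PI / 2)
  else 0.

Definition two_equal_isotropic (H : mat) (p1 p2 p3 : vec) : Prop :=
  (isotropic_pt H p1 /\ same_point p1 p2) \/
  (isotropic_pt H p2 /\ same_point p2 p3) \/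
  (isotropic_pt H p3 /\ same_point p3 p1).

Definition area_tri (H : mat) (p1 p2 p3 : vec) : R :=
  if excluded_middle_informative (two_equal_isotropic H p1 p2 p3) then 0
  else 2 * arg (Copp (Cmult (Cmult (herm H p1 p2) (herm H p2 p3)) (herm H p3 p1))).

Definition area_poly (H : mat) (c : vec) (ps : nat -> vec) (m : nat) : R :=
  fold_right Rplus 0
    (map (fun k => area_tri H c (ps k) (ps (if Nat.eqb k m then 1%nat else S k)))
         (seq 1 m)).

Definition unitary (H : mat) (g : mat) : Prop :=
  forall u v, herm H (mv g u) (mv g v) = herm H u v.

(* A homomorphism rho : H_n -> PU(W) is given by lifts Rl 1, ..., Rl n in U(W) of
   rho(r_1), ..., rho(r_n) satisfying the defining relations of H_n in PU(W)
   = U(W)/scalars: each Rl i ^2 is scalar and Rl n ... Rl 1 is scalar. *)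
Fixpoint prod_lifts (Rl : nat -> mat) (k : nat) : mat :=
  match k with
  | O => scalar_mat (RtoC 1)
  | S k' => mm (Rl k) (prod_lifts Rl k')
  end.

Definition is_Hn_rep (H : mat) (n : nat) (Rl : nat -> mat) : Prop :=
  (forall i, (1 <= i <= n)%nat -> unitary H (Rl i)) /\
  (forall i, (1 <= i <= n)%nat -> is_scalar (mm (Rl i) (Rl i))) /\
  is_scalar (prod_lifts Rl n).

Fixpoint orbit_pts (Rl : nat -> mat) (p : vec) (i : nat) : vec :=
  match i with
  | O => p
  | S i' => mv (Rl i) (orbit_pts Rl p i')
  end.

Definition area_rho (H : mat) (n : nat) (Rl : nat -> mat) (c p : vec) : R :=
  area_poly H c (orbit_pts Rl p) n.

(* Main.v *)
Require Import Defs.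
From Stdlib Require Import Reals ZArith Lra Lia Psatz List ClassicalDescription Classical.
Import ListNotations.
From Coquelicot Require Import Complex.
Open Scope R_scope.

Lemma sqrt_scale (x t : R) : 0 < x -> sqrt (x*x + (x*t)*(x*t)) = x * sqrt (1 + t*t).
Proof.
  intros Hx. replace (x*x + (x*t)*(x*t)) with ((x*x) * (1+t*t)) by ring.
  rewrite sqrt_mult_alt by nra. rewrite sqrt_square by lra. reflexivity.
Qed.

Lemma polar (z : C) : z <> RtoC 0 ->
  Cmod z * cos (arg z) = Re z /\ Cmod z * sin (arg z) = Im z.
Proof.
  destruct z as [x y]. intros Hz. unfold arg, Cmod, Re, Im; simpl.
  replace (x * (x * 1) + y * (y * 1)) with (x*x+y*y) by ring.
  destruct (Rlt_dec 0 x) as [Hx|Hx].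
  - rewrite cos_atan, sin_atan. unfold Rsqr.
    set (t := y/x). assert (Ey : y = x * t) by (unfold t; field; lra).
    assert (E : sqrt (x*x+y*y) = x * sqrt (1+t*t)) by (rewrite Ey; apply sqrt_scale; lra).
    rewrite E. assert (0 < sqrt (1 + t*t)) by (apply sqrt_lt_R0; nra).
    rewrite Ey. split; field; lra.
  - destruct (Rlt_dec x 0) as [Hx'|Hx'].
    + assert (Hc : forall a, cos (a - PI) = - cos a).
      { intros a. replace (a - PI) with ((a + PI) - 2*PI) by ring.
        rewrite cos_minus, cos_2PI, sin_2PI, neg_cos. ring. }
      assert (Hsn : forall a, sin (a - PI) = - sin a).
      { intros a. replace (a - PI) with ((a + PI) - 2*PI) by ring.
        rewrite sin_minus, cos_2PI, sin_2PI, neg_sin. ring. }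
      assert (E : sqrt (x*x + y*y) = (-x) * sqrt (1 + (y/x)*(y/x))).
      { replace (x*x+y*y) with ((-x)*(-x) + ((-x)*(-(y/x)))*((-x)*(-(y/x)))) by (field; lra).
        rewrite sqrt_scale by lra. f_equal. f_equal. ring. }
      assert (0 < sqrt (1 + y/x*(y/x))) by (apply sqrt_lt_R0; nra).
      set (t := y/x) in *. assert (Ey : y = x * t) by (unfold t; field; lra).
      destruct (Rle_dec 0 y);
        [rewrite neg_cos, neg_sin | rewrite Hc, Hsn];
        rewrite cos_atan, sin_atan; unfold Rsqr; rewrite E;
        rewrite Ey; split; field; lra.
    + assert (x = 0) by lra. subst x.
      destruct (Rlt_dec 0 y).
      * rewrite cos_PI2, sin_PI2. replace (0*0+y*y) with (y*y) by ring.
        rewrite sqrt_square by lra. split; ring.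
      * destruct (Rlt_dec y 0).
        -- rewrite cos_neg, sin_neg, cos_PI2, sin_PI2.
           replace (0*0+y*y) with ((-y)*(-y)) by ring.
           rewrite sqrt_square by lra. split; ring.
        -- exfalso. apply Hz. assert (y = 0) by lra. subst y. reflexivity.
Qed.

Lemma arg_bound (z : C) : - PI < arg z <= PI.
Proof.
  destruct z as [x y]. unfold arg, Re, Im; simpl.
  pose proof PI_RGT_0. pose proof (atan_bound (y/x)).
  destruct (Rlt_dec 0 x). lra.
  destruct (Rlt_dec x 0).
  - destruct (Rle_dec 0 y).
    + assert (/x < 0) by (apply Rinv_lt_0_compat; lra).
      assert (y/x <= 0) by (unfold Rdiv; nra).
      assert (atan (y/x) <= 0). { destruct (Req_dec (y/x) 0) as [E|E]. rewrite E, atan_0; lra. left. rewrite <- atan_0. apply atan_increasing. lra. }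
      lra.
    + assert (/x < 0) by (apply Rinv_lt_0_compat; lra).
      assert (y/x > 0) by (unfold Rdiv; nra).
      assert (atan (y/x) > 0). { rewrite <- atan_0. apply atan_increasing. lra. }
      lra.
  - destruct (Rlt_dec 0 y). lra. destruct (Rlt_dec y 0); lra.
Qed.

Lemma arg_right (z : C) : 0 <= Re z -> z <> RtoC 0 -> - (PI/2) <= arg z <= PI/2.
Proof.
  destruct z as [x y]. unfold arg, Re, Im; simpl. intros Hx Hz.
  pose proof PI_RGT_0. pose proof (atan_bound (y/x)).
  destruct (Rlt_dec 0 x). lra.
  destruct (Rlt_dec x 0). lra.
  destruct (Rlt_dec 0 y). lra. destruct (Rlt_dec y 0); lra.
Qed.

Lemma arg_right_strict (z : C) : 0 < Re z -> - (PI/2) < arg z < PI/2.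
Proof.
  destruct z as [x y]. unfold arg, Re, Im; simpl. intros Hx.
  pose proof (atan_bound (y/x)).
  destruct (Rlt_dec 0 x). lra. lra.
Qed.

Lemma arg_scale (r : R) (z : C) : 0 < r -> arg (Cmult (RtoC r) z) = arg z.
Proof.
  destruct z as [x y]. intros Hr. unfold arg, Re, Im, RtoC, Cmult; simpl.
  replace (r*x - 0*y) with (r*x) by ring. replace (r*y + 0*x) with (r*y) by ring.
  destruct (Rlt_dec 0 x); destruct (Rlt_dec 0 (r*x)); try nra.
  - f_equal. field. lra.
  - destruct (Rlt_dec x 0); destruct (Rlt_dec (r*x) 0); try nra.
    + destruct (Rle_dec 0 y); destruct (Rle_dec 0 (r*y)); try nra;
      replace (r*y/(r*x)) with (y/x) by (field; lra); reflexivity.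
    + assert (x = 0) by lra. subst x.
      destruct (Rlt_dec 0 y); destruct (Rlt_dec 0 (r*y)); try nra.
      destruct (Rlt_dec y 0); destruct (Rlt_dec (r*y) 0); try nra.
Qed.

Lemma arg_conj (z : C) : 0 <= Re z -> arg (Cconj z) = - arg z.
Proof.
  destruct z as [x y]. unfold arg, Re, Im, Cconj; simpl. intros Hx.
  destruct (Rlt_dec 0 x).
  - replace (-y/x) with (-(y/x)) by (field; lra). apply atan_opp.
  - destruct (Rlt_dec x 0). lra.
    repeat match goal with |- context[Rlt_dec ?a ?b] => destruct (Rlt_dec a b) end; lra.
Qed.

Lemma arg_posreal (z : C) : 0 <= Re z -> Im z = 0 -> arg z = 0.
Proof.
  destruct z as [x y]. unfold arg, Re, Im; simpl. intros Hx Hy. subst y.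
  destruct (Rlt_dec 0 x). replace (0/x) with 0 by (field; lra). apply atan_0.
  destruct (Rlt_dec x 0). lra. destruct (Rlt_dec 0 0). lra. destruct (Rlt_dec 0 0); lra.
Qed.

Lemma cos_sin_eq (a b : R) : cos a = cos b -> sin a = sin b ->
  exists k : Z, a = b + 2 * IZR k * PI.
Proof.
  intros Hc Hs.
  assert (H1 : cos (a - b) = 1).
  { rewrite cos_minus, Hc, Hs. pose proof (sin2_cos2 b). unfold Rsqr in *. lra. }
  assert (H2 : sin ((a - b)/2) = 0).
  { replace (a - b) with (2 * ((a-b)/2)) in H1 by field. rewrite cos_2a_sin in H1. nra. }
  destruct (sin_eq_0_0 _ H2) as [k Hk]. exists k. lra.
Qed.

Lemma arg_mult (z w : C) : z <> RtoC 0 -> w <> RtoC 0 ->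
  exists k : Z, arg z + arg w = arg (Cmult z w) + 2 * IZR k * PI.
Proof.
  intros Hz Hw.
  assert (Hzw : Cmult z w <> RtoC 0).
  { intro E. apply (f_equal Cmod) in E. rewrite Cmod_mult, Cmod_0 in E.
    apply Cmod_gt_0 in Hz. apply Cmod_gt_0 in Hw. nra. }
  destruct (polar z Hz) as [Hz1 Hz2]. destruct (polar w Hw) as [Hw1 Hw2].
  destruct (polar _ Hzw) as [H1 H2].
  rewrite Cmod_mult in H1, H2.
  apply Cmod_gt_0 in Hz. apply Cmod_gt_0 in Hw.
  destruct z as [a b]; destruct w as [c d]. simpl in *.
  set (mz := Cmod (a,b)) in *. set (mw := Cmod (c,d)) in *.
  clearbody mz mw.
  set (az := arg (a,b)) in *. set (aw := arg (c,d)) in *. clearbody az aw.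
  apply cos_sin_eq.
  - rewrite cos_plus. apply (Rmult_eq_reg_l (mz * mw)); [|nra].
    rewrite H1. rewrite <- Hz1, <- Hz2, <- Hw1, <- Hw2. ring.
  - rewrite sin_plus. apply (Rmult_eq_reg_l (mz * mw)); [|nra].
    rewrite H2. rewrite <- Hz1, <- Hz2, <- Hw1, <- Hw2. ring.
Qed.

Lemma Cmult_neq0 (z w : C) : z <> RtoC 0 -> w <> RtoC 0 -> Cmult z w <> RtoC 0.
Proof.
  intros Hz Hw E. apply (f_equal Cmod) in E. rewrite Cmod_mult, Cmod_0 in E.
  apply Cmod_gt_0 in Hz. apply Cmod_gt_0 in Hw. nra.
Qed.

Fixpoint sumB (f : nat -> R) (m : nat) : R :=
  match m with O => 0 | S k => sumB f k + f k end.
Fixpoint prodB (f : nat -> C) (m : nat) : C :=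
  match m with O => RtoC 1 | S k => Cmult (prodB f k) (f k) end.

Lemma prodB_neq0 f m : (forall j, (j < m)%nat -> f j <> RtoC 0) -> prodB f m <> RtoC 0.
Proof.
  induction m; intros Hf; simpl.
  - intro E. inversion E. lra.
  - apply Cmult_neq0. apply IHm. intros; apply Hf; lia. apply Hf; lia.
Qed.

Lemma arg_sum f m : (forall j, (j < m)%nat -> f j <> RtoC 0) ->
  exists k : Z, sumB (fun j => arg (f j)) m = arg (prodB f m) + 2 * IZR k * PI.
Proof.
  induction m; intros Hf; simpl.
  - exists 0%Z. rewrite arg_posreal; simpl; lra.
  - destruct IHm as [k Hk]. intros; apply Hf; lia.
    destruct (arg_mult (prodB f m) (f m)) as [k' Hk'].
    apply prodB_neq0. intros; apply Hf; lia. apply Hf; lia.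
    exists (k + k')%Z. rewrite plus_IZR. lra.
Qed.

Lemma sumB_ext f g m : (forall j, (j < m)%nat -> f j = g j) -> sumB f m = sumB g m.
Proof. induction m; intros; simpl; auto. rewrite IHm, H; auto. Qed.

Lemma prodB_ext f g m : (forall j, (j < m)%nat -> f j = g j) -> prodB f m = prodB g m.
Proof. induction m; intros; simpl; auto. rewrite IHm, H; auto. Qed.

Lemma sumB_telescope h m : sumB (fun j => h j - h (S j)) m = h O - h m.
Proof. induction m; simpl. ring. rewrite IHm. ring. Qed.

Lemma sumB_plus f g m : sumB (fun j => f j + g j) m = sumB f m + sumB g m.
Proof. induction m; simpl. ring. rewrite IHm. ring. Qed.

Lemma sumB_scal c f m : sumB (fun j => c * f j) m = c * sumB f m.
Proof. induction m; simpl. ring. rewrite IHm. ring. Qed.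

Lemma prodB_shift f m : prodB f (S m) = Cmult (f O) (prodB (fun j => f (S j)) m).
Proof.
  induction m. simpl. ring.
  change (prodB f (S (S m))) with (Cmult (prodB f (S m)) (f (S m))).
  rewrite IHm. simpl. ring.
Qed.

Lemma fold_seq (F : nat -> R) s n :
  fold_right Rplus 0 (map F (seq s n)) = sumB (fun j => F (s + j)%nat) n.
Proof.
  revert s. induction n; intros s. reflexivity.
  rewrite seq_S, map_app, fold_right_app. simpl.
  assert (G : forall l x, fold_right Rplus x l = fold_right Rplus 0 l + x).
  { induction l; intros; simpl. ring. rewrite IHl. ring. }
  rewrite G, IHn. ring.
Qed.

Lemma arg_sq (z : C) (n : nat) (r : R) : z <> RtoC 0 -> 0 < r ->
  Cmult z z = RtoC ((-1)^n * r) ->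
  exists k : Z, 2 * arg z = INR n * PI + 2 * IZR k * PI.
Proof.
  intros Hz Hr E.
  destruct (arg_mult z z Hz Hz) as [k Hk]. rewrite E in Hk.
  destruct (Nat.Even_or_Odd n) as [[m Hm]|[m Hm]]; subst n.
  - rewrite pow_1_even in Hk.
    assert (A0 : arg (RtoC (1 * r)) = 0) by (apply arg_posreal; simpl; lra).
    rewrite A0 in Hk.
    exists (k - Z.of_nat m)%Z. rewrite minus_IZR, <- INR_IZR_INZ, mult_INR. simpl. lra.
  - replace (2*m+1)%nat with (S (2*m)) in Hk by lia. rewrite pow_1_odd in Hk.
    assert (A0 : arg (RtoC (-1 * r)) = PI).
    { unfold arg. simpl.
      destruct (Rlt_dec 0 (-1*r)). lra. destruct (Rlt_dec (-1*r) 0); [|lra].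
      destruct (Rle_dec 0 0); [|lra]. replace (0/(-1*r)) with 0 by (field; lra).
      rewrite atan_0. ring. }
    rewrite A0 in Hk.
    exists (k - Z.of_nat m)%Z. rewrite minus_IZR, <- INR_IZR_INZ, plus_INR, mult_INR. simpl. lra.
Qed.


Definition scal (l : C) (u : vec) : vec := Vec (Cmult l (v1 u)) (Cmult l (v2 u)).
Definition det2 (u v : vec) : C := Cminus (Cmult (v1 u) (v2 v)) (Cmult (v2 u) (v1 v)).
Definition detm (M : mat) : C := Cminus (Cmult (m11 M) (m22 M)) (Cmult (m12 M) (m21 M)).
Definition cmat (R : mat) : mat := Mat (Cconj (m11 R)) (Cconj (m12 R)) (Cconj (m21 R)) (Cconj (m22 R)).
Definition nrm (z : C) : R := Re z * Re z + Im z * Im z.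

Ltac cexp := unfold herm, mv, mm, scal, det2, detm, cmat, scalar_mat in *; simpl in *;
  repeat rewrite ?Cplus_conj, ?Cmult_conj, ?Cminus_conj, ?Copp_conj, ?Cconj_conj in *.

Lemma gram2 (M : mat) (u v : vec) :
  Cminus (Cmult (herm M u u) (herm M v v)) (Cmult (herm M u v) (herm M v u)) =
  Cmult (Cmult (det2 u v) (Cconj (det2 u v))) (detm M).
Proof. destruct u, v, M. cexp. ring. Qed.

Lemma gram3 (M : mat) (a b c : vec) :
  let g := herm M in
  Cplus (Cminus (Cmult (g a a) (Cminus (Cmult (g b b) (g c c)) (Cmult (g b c) (g c b))))
                (Cmult (g a b) (Cminus (Cmult (g b a) (g c c)) (Cmult (g b c) (g c a)))))
        (Cmult (g a c) (Cminus (Cmult (g b a) (g c b)) (Cmult (g b b) (g c a)))) = RtoC 0.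
Proof. destruct a, b, c, M. simpl. cexp. ring. Qed.

Lemma conj_R (a : R) : Cconj (RtoC a) = RtoC a.
Proof. unfold Cconj, RtoC; simpl. f_equal. ring. Qed.

Lemma hermitian_decomp H : hermitian_mat H ->
  exists (a b : R) (c : C), H = Mat (RtoC a) c (Cconj c) (RtoC b).
Proof.
  destruct H as [[x1 y1] m12 m21 [x2 y2]]. unfold hermitian_mat, Cconj; simpl.
  intros [E1 [E2 E3]]. inversion E1. inversion E2. subst m21.
  exists x1, x2, m12. unfold RtoC. repeat f_equal; lra.
Qed.

Lemma herm_sym H u v : hermitian_mat H -> herm H v u = Cconj (herm H u v).
Proof.
  intros HH. destruct (hermitian_decomp H HH) as [a [b [c E]]]. subst H.
  destruct u, v. cexp. rewrite !conj_R. ring.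
Qed.

Lemma C_eq_conj_real (z : C) : z = Cconj z -> z = RtoC (Re z).
Proof. destruct z as [x y]. unfold Cconj, RtoC; simpl. intros E. inversion E. f_equal. lra. Qed.

Lemma herm_self H u : hermitian_mat H -> herm H u u = RtoC (Re (herm H u u)).
Proof. intros HH. apply C_eq_conj_real. apply herm_sym; auto. Qed.

Lemma mult_conj_nrm (z : C) : Cmult z (Cconj z) = RtoC (nrm z).
Proof. destruct z as [x y]. unfold nrm, Cconj, RtoC, Cmult; simpl. f_equal; ring. Qed.

Lemma nrm_ge0 z : 0 <= nrm z.
Proof. unfold nrm. nra. Qed.

Lemma nrm_pos z : z <> RtoC 0 -> 0 < nrm z.
Proof.
  destruct z as [x y]. unfold nrm; simpl. intros Hz.
  destruct (Req_dec x 0); destruct (Req_dec y 0); try nra.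
  subst. exfalso. apply Hz. reflexivity.
Qed.

Lemma nrm_zero z : nrm z = 0 -> z = RtoC 0.
Proof.
  intros E. destruct (classic (z = RtoC 0)) as [|N]; auto. apply nrm_pos in N. lra.
Qed.

Lemma detm_herm H : hermitian_mat H -> detm H = RtoC (Re (detm H)).
Proof.
  intros HH. destruct (hermitian_decomp H HH) as [a [b [c E]]]. subst H.
  apply C_eq_conj_real. cexp. rewrite !conj_R. ring.
Qed.

Lemma gram2_real H u v : hermitian_mat H ->
  Re (herm H u u) * Re (herm H v v) - nrm (herm H u v) = nrm (det2 u v) * Re (detm H).
Proof.
  intros HH. pose proof (gram2 H u v) as G.
  rewrite (herm_sym H u v HH) in G. rewrite (herm_self H u HH), (herm_self H v HH) in G.
  rewrite !mult_conj_nrm in G. rewrite (detm_herm H HH) in G.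
  revert G. generalize (Re (herm H u u)) (Re (herm H v v)) (nrm (herm H u v)) (nrm (det2 u v)) (Re (detm H)).
  intros a b c d e G. apply (f_equal Re) in G. simpl in G. lra.
Qed.

Definition delta (H : mat) : R := Re (detm H).

Lemma delta_neg H : signature_pm H -> delta H < 0.
Proof.
  intros [HH [[u Hu] [v Hv]]]. pose proof (gram2_real H u v HH) as G.
  unfold delta. pose proof (nrm_ge0 (herm H u v)). pose proof (nrm_ge0 (det2 u v)).
  destruct (Rlt_dec (Re (detm H)) 0); auto. exfalso.
  assert (Re (herm H u u) * Re (herm H v v) < 0) by nra. nra.
Qed.

Lemma gram3_pure (x y w : C) (da db dc : R) :
  Cplus (Cminus (Cmult (RtoC da) (Cminus (Cmult (RtoC db) (RtoC dc)) (Cmult y (Cconj y))))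
                (Cmult x (Cminus (Cmult (Cconj x) (RtoC dc)) (Cmult y w))))
        (Cmult (Cconj w) (Cminus (Cmult (Cconj x) (Cconj y)) (Cmult (RtoC db) w))) = RtoC 0 ->
  2 * Re (Cmult (Cmult x y) w) = - (da * db * dc) + da * nrm y + db * nrm w + dc * nrm x.
Proof.
  destruct x as [x1 x2], y as [y1 y2], w as [w1 w2]. unfold nrm, Cconj, RtoC, Cmult, Cminus, Cplus, Copp; simpl.
  intros G. apply (f_equal fst) in G. simpl in G. lra.
Qed.

Lemma gram3_real H a b c : hermitian_mat H ->
  2 * Re (Cmult (Cmult (herm H a b) (herm H b c)) (herm H c a)) =
  - (Re (herm H a a) * Re (herm H b b) * Re (herm H c c))
  + Re (herm H a a) * nrm (herm H b c) + Re (herm H b b) * nrm (herm H c a)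
  + Re (herm H c c) * nrm (herm H a b).
Proof.
  intros HH. apply gram3_pure. pose proof (gram3 H a b c) as G. simpl in G.
  rewrite (herm_sym H a b HH), (herm_sym H b c HH), (herm_sym H c a HH) in G.
  rewrite <- (herm_self H a HH), <- (herm_self H b HH), <- (herm_self H c HH).
  exact G.
Qed.

Definition Tri (H : mat) (a b c : vec) : C :=
  Copp (Cmult (Cmult (herm H a b) (herm H b c)) (herm H c a)).

Lemma rcs H u v : signature_pm H -> Re (herm H u u) <= 0 -> Re (herm H v v) <= 0 ->
  Re (herm H u u) * Re (herm H v v) <= nrm (herm H u v).
Proof.
  intros HS Hu Hv. pose proof (gram2_real H u v (proj1 HS)). pose proof (delta_neg H HS).
  unfold delta in *. pose proof (nrm_ge0 (det2 u v)). nra.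
Qed.

Lemma ReT_nonneg H a b c : signature_pm H ->
  Re (herm H a a) <= 0 -> Re (herm H b b) <= 0 -> Re (herm H c c) <= 0 ->
  0 <= Re (Tri H a b c).
Proof.
  intros HS Ha Hb Hc. pose proof (gram3_real H a b c (proj1 HS)) as G.
  pose proof (rcs H a b HS Ha Hb). pose proof (rcs H b c HS Hb Hc). pose proof (rcs H c a HS Hc Ha).
  unfold Tri. replace (Re (Copp _)) with (- Re (Cmult (Cmult (herm H a b) (herm H b c)) (herm H c a))) by (simpl; ring).
  revert G H0 H1 H2. generalize (Re (Cmult (Cmult (herm H a b) (herm H b c)) (herm H c a))).
  generalize (nrm (herm H a b)) (nrm (herm H b c)) (nrm (herm H c a)).
  revert Ha Hb Hc. generalize (Re (herm H a a)) (Re (herm H b b)) (Re (herm H c c)).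
  intros da db dc Ha Hb Hc nab nbc nca P G H1 H2 H3.
  assert (da * (nbc - db * dc) <= 0) by nra.
  assert (db * (nca - dc * da) <= 0) by nra.
  assert (dc * (nab - da * db) <= 0) by nra.
  assert (da * db * dc <= 0). { assert (0 <= da * db) by nra. nra. }
  nra.
Qed.

Lemma ReT_pos H a b c : signature_pm H ->
  Re (herm H a a) < 0 -> Re (herm H b b) <= 0 -> Re (herm H c c) <= 0 ->
  herm H b c <> RtoC 0 -> 0 < Re (Tri H a b c).
Proof.
  intros HS Ha Hb Hc Hbc. pose proof (gram3_real H a b c (proj1 HS)) as G.
  pose proof (rcs H a b HS (Rlt_le _ _ Ha) Hb). pose proof (rcs H b c HS Hb Hc).
  pose proof (rcs H c a HS Hc (Rlt_le _ _ Ha)). apply nrm_pos in Hbc.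
  unfold Tri. replace (Re (Copp _)) with (- Re (Cmult (Cmult (herm H a b) (herm H b c)) (herm H c a))) by (simpl; ring).
  revert G H0 H1 H2 Hbc. generalize (Re (Cmult (Cmult (herm H a b) (herm H b c)) (herm H c a))).
  generalize (nrm (herm H a b)) (nrm (herm H b c)) (nrm (herm H c a)).
  revert Ha Hb Hc. generalize (Re (herm H a a)) (Re (herm H b b)) (Re (herm H c c)).
  intros da db dc Ha Hb Hc nab nbc nca P G H1 H2 H3 Hn.
  assert (da * (nbc - db * dc) <= 0) by nra.
  assert (db * (nca - dc * da) <= 0) by nra.
  assert (dc * (nab - da * db) <= 0) by nra.
  assert (0 <= db * dc) by nra.
  destruct (Rlt_dec 0 (db * dc)).
  - assert (da * (db * dc) < 0) by nra. nra.
  - assert (db * dc = 0) by lra. assert (da * nbc < 0) by nra. nra.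
Qed.

Lemma herm_scal_l H l u v : herm H (scal l u) v = Cmult l (herm H u v).
Proof. destruct u, v. cexp. ring. Qed.
Lemma herm_scal_r H l u v : herm H u (scal l v) = Cmult (Cconj l) (herm H u v).
Proof. destruct u, v. cexp. ring. Qed.

Lemma scal_scal l m u : scal l (scal m u) = scal (Cmult l m) u.
Proof. destruct u. unfold scal; simpl. f_equal; ring. Qed.
Lemma scal_one u : scal (RtoC 1) u = u.
Proof. destruct u. unfold scal; simpl. f_equal; ring. Qed.

Lemma C1_neq0 : RtoC 1 <> RtoC 0.
Proof. intro E. inversion E. lra. Qed.

Lemma Cinv_l' (l : C) : l <> RtoC 0 -> Cmult (Cinv l) l = RtoC 1.
Proof. intros. field. auto. Qed.

Lemma vec_nz_iff (u : vec) : u <> vzero <-> (v1 u <> RtoC 0 \/ v2 u <> RtoC 0).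
Proof.
  destruct u as [a b]. unfold vzero; simpl. split.
  - intros N. destruct (classic (a = RtoC 0)); destruct (classic (b = RtoC 0)); auto.
    subst; contradiction.
  - intros [N|N] E; inversion E; auto.
Qed.

Lemma scal_nz l u : l <> RtoC 0 -> u <> vzero -> scal l u <> vzero.
Proof.
  intros Hl Hu. apply vec_nz_iff in Hu. apply vec_nz_iff. unfold scal; simpl.
  destruct Hu; [left|right]; apply Cmult_neq0; auto.
Qed.

Lemma Cmult_integral (z w : C) : Cmult z w = RtoC 0 -> z = RtoC 0 \/ w = RtoC 0.
Proof.
  intros E. destruct (classic (z = RtoC 0)); auto. destruct (classic (w = RtoC 0)); auto.
  exfalso. apply (Cmult_neq_0 z w); auto.
Qed.

Lemma Cmult_eq_reg_l (a x y : C) : Cmult a x = Cmult a y -> a <> RtoC 0 -> x = y.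
Proof.
  intros E Ha. replace x with (Cmult (Cinv a) (Cmult a x)) by (field; auto).
  rewrite E. field; auto.
Qed.

Lemma dep (a b : vec) : det2 a b = RtoC 0 -> a <> vzero -> exists l, b = scal l a.
Proof.
  intros D Ha. apply vec_nz_iff in Ha. destruct a as [a1 a2], b as [b1 b2].
  unfold det2, scal in *; simpl in *.
  destruct (classic (a1 = RtoC 0)) as [E|E].
  - destruct Ha as [|Ha]; [contradiction|]. subst a1.
    exists (Cdiv b2 a2). f_equal.
    + assert (Cmult a2 b1 = RtoC 0).
      { replace (Cmult a2 b1) with (Copp (Cminus (Cmult (RtoC 0) b2) (Cmult a2 b1))) by ring.
        rewrite D. ring. }
      apply Cmult_integral in H. destruct H; [contradiction|]. subst. ring.
    + field. auto.
  - exists (Cdiv b1 a1). f_equal.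
    + field. auto.
    + apply (Cmult_eq_reg_l a1); auto.
      symmetry.
      replace (Cmult a1 b2) with (Cplus (Cminus (Cmult a1 b2) (Cmult a2 b1)) (Cmult a2 b1)) by ring.
      rewrite D. field. auto.
Qed.

Definition EI (H : mat) (x y : vec) : Prop := isotropic_pt H x /\ same_point x y.

Lemma same_point_scal p q : same_point p q <-> exists l, l <> RtoC 0 /\ p = scal l q.
Proof. unfold same_point, scal. tauto. Qed.

Lemma cb_re H a : closed_ball_pt H a -> Re (herm H a a) <= 0.
Proof.
  intros [[_ N]|[_ I]]. lra. rewrite I. simpl. lra.
Qed.

Lemma cb_nz H a : closed_ball_pt H a -> a <> vzero.
Proof. intros [[N _]|[N _]]; auto. Qed.

Lemma neg_not_iso H a : negative_pt H a -> ~ isotropic_pt H a.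
Proof. intros [_ N] [_ I]. rewrite I in N. simpl in N. lra. Qed.

Lemma iso_scal H l a : hermitian_mat H -> l <> RtoC 0 ->
  (isotropic_pt H (scal l a) <-> isotropic_pt H a).
Proof.
  intros HH Hl. unfold isotropic_pt. rewrite herm_scal_l, herm_scal_r.
  split; intros [N E].
  - split. intro Z; subst; apply N; unfold scal, vzero; simpl; f_equal; ring.
    rewrite Cmult_assoc in E. rewrite mult_conj_nrm in E.
    apply Cmult_integral in E. destruct E as [E|E]; auto.
    exfalso. apply nrm_pos in Hl. inversion E. lra.
  - split. apply scal_nz; auto. rewrite E. ring.
Qed.

Lemma sp_sym p q : same_point p q -> same_point q p.
Proof.
  rewrite !same_point_scal. intros [l [Hl E]]. exists (Cinv l). split.
  - intro Z. apply C1_neq0. rewrite <- (Cinv_l l Hl), Z. ring.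
  - subst p. rewrite scal_scal. rewrite Cinv_l by auto. rewrite scal_one. reflexivity.
Qed.

Lemma sp_scal_l l p q : l <> RtoC 0 -> (same_point (scal l p) q <-> same_point p q).
Proof.
  intros Hl. rewrite !same_point_scal. split; intros [m [Hm E]].
  - exists (Cmult (Cinv l) m). split. apply Cmult_neq0; auto.
    intro Z. apply C1_neq0. rewrite <- (Cinv_l l Hl), Z. ring.
    rewrite <- scal_scal, <- E, scal_scal, Cinv_l, scal_one; auto.
  - exists (Cmult l m). split. apply Cmult_neq0; auto. rewrite E, scal_scal; auto.
Qed.

Lemma sp_scal_r l p q : l <> RtoC 0 -> (same_point p (scal l q) <-> same_point p q).
Proof.
  intros Hl. split; intros E; apply sp_sym; apply sp_sym in E.
  - apply (sp_scal_l l); auto. - apply sp_scal_l; auto.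
Qed.

Lemma EI_sym H x y : hermitian_mat H -> EI H x y -> EI H y x.
Proof.
  intros HH [I S]. split; [|apply sp_sym; auto].
  apply same_point_scal in S. destruct S as [l [Hl E]]. subst x.
  apply iso_scal in I; auto.
Qed.

Lemma EI_scal_l H l x y : hermitian_mat H -> l <> RtoC 0 -> (EI H (scal l x) y <-> EI H x y).
Proof. intros HH Hl. unfold EI. rewrite iso_scal, sp_scal_l; tauto. Qed.

Lemma EI_scal_r H l x y : hermitian_mat H -> l <> RtoC 0 -> (EI H x (scal l y) <-> EI H x y).
Proof. intros HH Hl. unfold EI. rewrite sp_scal_r; tauto. Qed.

Lemma EI_neg_l H o x : negative_pt H o -> ~ EI H o x.
Proof. intros N [I _]. apply (neg_not_iso H o); auto. Qed.

Lemma EI_neg_r H o x : hermitian_mat H -> negative_pt H o -> ~ EI H x o.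
Proof. intros HH N E. apply EI_sym in E; auto. apply (EI_neg_l H o x); auto. Qed.

Lemma herm_nz H a b : signature_pm H -> closed_ball_pt H a -> closed_ball_pt H b ->
  ~ EI H a b -> herm H a b <> RtoC 0.
Proof.
  intros HS Ha Hb NE Z. pose proof (gram2_real H a b (proj1 HS)) as G.
  pose proof (delta_neg H HS). unfold delta in *. rewrite Z in G.
  pose proof (cb_re H a Ha). pose proof (cb_re H b Hb). pose proof (nrm_ge0 (det2 a b)).
  replace (nrm (RtoC 0)) with 0 in G by (unfold nrm; simpl; ring).
  assert (nrm (det2 a b) = 0) by nra. apply nrm_zero in H4.
  destruct (dep a b H4 (cb_nz H a Ha)) as [l El]. subst b.
  assert (Hl : l <> RtoC 0).
  { intro Z'. subst l. apply (cb_nz H _ Hb). unfold scal, vzero. f_equal; ring. }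
  rewrite herm_scal_r in Z. apply Cmult_integral in Z. destruct Z as [Z|Z].
  - apply Hl. rewrite <- (Cconj_conj l), Z. unfold Cconj, RtoC; simpl. f_equal. ring.
  - apply NE. split.
    + split. apply (cb_nz H a Ha). rewrite (herm_self H a (proj1 HS)).
      rewrite (herm_self H a (proj1 HS)) in Z.
      assert (E : Re (herm H a a) = 0) by (apply (f_equal fst) in Z; exact Z).
      rewrite E. reflexivity.
    + apply sp_sym. apply same_point_scal. exists l. auto.
Qed.

Lemma Re_RtoC x : Re (RtoC x) = x. Proof. reflexivity. Qed.
Lemma Im_RtoC x : Im (RtoC x) = 0. Proof. reflexivity. Qed.

Lemma A_deg H a b c : EI H a b \/ EI H b c \/ EI H c a -> area_tri H a b c = 0.
Proof.
  intros D. unfold area_tri. destruct (excluded_middle_informative _) as [|N]; auto.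
  exfalso; apply N; exact D.
Qed.

Lemma A_nd H a b c : ~ (EI H a b \/ EI H b c \/ EI H c a) -> area_tri H a b c = 2 * arg (Tri H a b c).
Proof.
  intros D. unfold area_tri. destruct (excluded_middle_informative _) as [Y|]; auto.
  exfalso; apply D; exact Y.
Qed.

Lemma A_cases H a b c :
  (EI H a b \/ EI H b c \/ EI H c a) \/ ~ (EI H a b \/ EI H b c \/ EI H c a).
Proof. apply classic. Qed.

Lemma Tri_cyc H a b c : Tri H b c a = Tri H a b c.
Proof. unfold Tri. ring. Qed.

Lemma A_cyc H a b c : area_tri H b c a = area_tri H a b c.
Proof.
  destruct (A_cases H a b c) as [D|D].
  - rewrite !A_deg; auto; tauto.
  - rewrite !A_nd, Tri_cyc; auto; tauto.
Qed.

Lemma A_swap H a b c : signature_pm H ->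
  closed_ball_pt H a -> closed_ball_pt H b -> closed_ball_pt H c ->
  area_tri H a c b = - area_tri H a b c.
Proof.
  intros HS Ha Hb Hc. pose proof (proj1 HS) as HH.
  assert (Sy : forall x y, EI H x y <-> EI H y x) by (split; apply EI_sym; auto).
  destruct (A_cases H a b c) as [D|D].
  - rewrite !A_deg; [lra| |]; auto. rewrite (Sy a c), (Sy c b), (Sy b a). tauto.
  - rewrite !A_nd; auto.
    + assert (E : Tri H a c b = Cconj (Tri H a b c)).
      { unfold Tri. rewrite Copp_conj, !Cmult_conj.
        rewrite (herm_sym H a c HH), (herm_sym H c b HH), (herm_sym H b a HH).
        rewrite !Cconj_conj. ring. }
      rewrite E, arg_conj. ring.
      apply ReT_nonneg; auto; apply cb_re; auto.
    + rewrite (Sy a c), (Sy c b), (Sy b a). tauto.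
Qed.

Lemma Tri_scal1 H l a b c : Tri H (scal l a) b c = Cmult (RtoC (nrm l)) (Tri H a b c).
Proof.
  unfold Tri. rewrite herm_scal_l, herm_scal_r. rewrite <- mult_conj_nrm. ring.
Qed.

Lemma A_scal1 H l a b c : hermitian_mat H -> l <> RtoC 0 ->
  area_tri H (scal l a) b c = area_tri H a b c.
Proof.
  intros HH Hl. destruct (A_cases H a b c) as [D|D].
  - rewrite !A_deg; auto. rewrite EI_scal_l, EI_scal_r; auto.
  - rewrite !A_nd; auto.
    + rewrite Tri_scal1, arg_scale; auto. apply nrm_pos; auto.
    + rewrite EI_scal_l, EI_scal_r; auto.
Qed.

Lemma A_scal2 H l a b c : hermitian_mat H -> l <> RtoC 0 ->
  area_tri H a (scal l b) c = area_tri H a b c.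
Proof.
  intros. rewrite <- (A_cyc H a (scal l b) c), <- (A_cyc H a b c). apply A_scal1; auto.
Qed.

Lemma A_scal3 H l a b c : hermitian_mat H -> l <> RtoC 0 ->
  area_tri H a b (scal l c) = area_tri H a b c.
Proof.
  intros. rewrite (A_cyc H (scal l c) a b), (A_cyc H c a b). apply A_scal1; auto.
Qed.

Lemma A_self H o a : signature_pm H -> Re (herm H a a) <= 0 -> area_tri H o a a = 0.
Proof.
  intros HS Ha. destruct (A_cases H o a a) as [D|D].
  - apply A_deg; auto.
  - rewrite A_nd; auto.
    assert (E : Tri H o a a = RtoC (- Re (herm H a a) * nrm (herm H o a))).
    { unfold Tri. rewrite (herm_sym H o a (proj1 HS)).
      rewrite (herm_self H a (proj1 HS)) at 1.
      replace (Cmult (Cmult (herm H o a) (RtoC (Re (herm H a a)))) (Cconj (herm H o a)))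
        with (Cmult (RtoC (Re (herm H a a))) (Cmult (herm H o a) (Cconj (herm H o a)))) by ring.
      rewrite mult_conj_nrm. unfold RtoC, Cmult, Copp; simpl. f_equal; ring. }
    rewrite E, arg_posreal. ring. rewrite Re_RtoC. pose proof (nrm_ge0 (herm H o a)). nra. apply Im_RtoC.
Qed.

Lemma IZR_small (k : Z) : -2 * PI < 2 * IZR k * PI < 2 * PI -> k = 0%Z.
Proof.
  intros [H1 H2]. pose proof PI_RGT_0.
  assert (-1 < IZR k) by nra. assert (IZR k < 1) by nra.
  apply lt_IZR in H0. apply lt_IZR in H3. lia.
Qed.

Lemma cocycle_deg H o a b c : signature_pm H -> negative_pt H o ->
  closed_ball_pt H a -> closed_ball_pt H b -> closed_ball_pt H c -> EI H a b ->
  area_tri H a b c = 0 /\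
  area_tri H o a b + area_tri H o b c + area_tri H o c a = 0.
Proof.
  intros HS Ho Ha Hb Hc E. split. apply A_deg; auto.
  rewrite (A_deg H o a b) by auto.
  destruct E as [_ S]. apply same_point_scal in S. destruct S as [l [Hl El]].
  rewrite El. fold (scal l b). rewrite A_scal3 by (auto; apply HS).
  rewrite (A_swap H o b c) by (auto; left; auto). ring.
Qed.

Lemma cocycle H o a b c : signature_pm H -> negative_pt H o ->
  closed_ball_pt H a -> closed_ball_pt H b -> closed_ball_pt H c ->
  area_tri H a b c = area_tri H o a b + area_tri H o b c + area_tri H o c a.
Proof.
  intros HS Ho Ha Hb Hc. pose proof (proj1 HS) as HH.
  destruct (classic (EI H a b)) as [E|Nab].
  { destruct (cocycle_deg H o a b c HS Ho Ha Hb Hc E). lra. }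
  destruct (classic (EI H b c)) as [E|Nbc].
  { destruct (cocycle_deg H o b c a HS Ho Hb Hc Ha E). rewrite <- A_cyc. lra. }
  destruct (classic (EI H c a)) as [E|Nca].
  { destruct (cocycle_deg H o c a b HS Ho Hc Ha Hb E). rewrite A_cyc. lra. }
  assert (Ob : closed_ball_pt H o) by (left; auto).
  assert (Hoa := herm_nz H o a HS Ob Ha (EI_neg_l H o a Ho)).
  assert (Hob := herm_nz H o b HS Ob Hb (EI_neg_l H o b Ho)).
  assert (Hoc := herm_nz H o c HS Ob Hc (EI_neg_l H o c Ho)).
  assert (Hab := herm_nz H a b HS Ha Hb Nab).
  assert (Hbc := herm_nz H b c HS Hb Hc Nbc).
  assert (Hca := herm_nz H c a HS Hc Ha Nca).
  assert (NO : forall x, ~ EI H o x /\ ~ EI H x o) by (intros; split; [apply EI_neg_l|apply EI_neg_r]; auto).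
  rewrite !A_nd; try (intros [E|[E|E]]; first [exact (Nab E) | exact (Nbc E) | exact (Nca E) | exact (proj1 (NO _) E) | exact (proj2 (NO _) E)]).
  set (T0 := Tri H a b c). set (T1 := Tri H o a b). set (T2 := Tri H o b c). set (T3 := Tri H o c a).
  assert (TP : Cmult (Cmult T1 T2) T3 =
     Cmult (RtoC (nrm (herm H o a) * nrm (herm H o b) * nrm (herm H o c))) T0).
  { unfold T0, T1, T2, T3, Tri.
    rewrite (herm_sym H o a HH), (herm_sym H o b HH), (herm_sym H o c HH).
    rewrite !RtoC_mult, <- !mult_conj_nrm. ring. }
  assert (N0 : T0 <> RtoC 0).
  { unfold T0, Tri. intro Z.
    assert (Z' : Cmult (Cmult (herm H a b) (herm H b c)) (herm H c a) = RtoC 0).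
    { transitivity (Copp (Copp (Cmult (Cmult (herm H a b) (herm H b c)) (herm H c a)))). ring.
      rewrite Z. ring. }
    clear Z. rename Z' into Z.
    apply Cmult_integral in Z; destruct Z as [Z|Z]; [apply Cmult_integral in Z; destruct Z as [Z|Z]|]; auto. }
  assert (R1 : 0 < Re T1) by (apply ReT_pos; auto; [apply Ho|apply cb_re|apply cb_re]; auto).
  assert (R2 : 0 < Re T2) by (apply ReT_pos; auto; [apply Ho|apply cb_re|apply cb_re]; auto).
  assert (R3 : 0 < Re T3) by (apply ReT_pos; auto; [apply Ho|apply cb_re|apply cb_re]; auto).
  assert (R0 : 0 <= Re T0) by (apply ReT_nonneg; auto; apply cb_re; auto).
  assert (NZ : forall T, 0 < Re T -> T <> RtoC 0) by (intros T HT Z; rewrite Z in HT; simpl in HT; lra).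
  destruct (arg_mult T1 T2) as [k1 K1]; auto.
  destruct (arg_mult (Cmult T1 T2) T3) as [k2 K2]; auto. apply Cmult_neq0; auto.
  rewrite TP, arg_scale in K2.
  2:{ pose proof (nrm_pos _ Hoa). pose proof (nrm_pos _ Hob). pose proof (nrm_pos _ Hoc).
      apply Rmult_lt_0_compat; auto. apply Rmult_lt_0_compat; auto. }
  pose proof (arg_right_strict T1 R1). pose proof (arg_right_strict T2 R2).
  pose proof (arg_right_strict T3 R3). pose proof (arg_right T0 R0 N0).
  replace (2 * IZR k1 * PI) with (2 * (IZR k1 * PI)) in K1 by ring.
  replace (2 * IZR k2 * PI) with (2 * (IZR k2 * PI)) in K2 by ring.
  assert (Ek : (k1 + k2)%Z = 0%Z).
  { apply IZR_small. replace (2 * IZR (k1 + k2) * PI) with (2 * (IZR k1 * PI) + 2 * (IZR k2 * PI))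
      by (rewrite plus_IZR; ring).
    set (x1 := IZR k1 * PI) in *. set (x2 := IZR k2 * PI) in *. lra. }
  assert (E2 : IZR k1 * PI + IZR k2 * PI = 0).
  { rewrite <- Rmult_plus_distr_r, <- plus_IZR, Ek. ring. }
  set (x1 := IZR k1 * PI) in *. set (x2 := IZR k2 * PI) in *. lra.
Qed.


Lemma mv_mm A B u : mv (mm A B) u = mv A (mv B u).
Proof. destruct u. cexp. f_equal; ring. Qed.
Lemma mv_scalar l u : mv (scalar_mat l) u = scal l u.
Proof. destruct u. cexp. f_equal; ring. Qed.
Lemma mv_scal R l u : mv R (scal l u) = scal l (mv R u).
Proof. destruct u. cexp. f_equal; ring. Qed.
Lemma detm_mm A B : detm (mm A B) = Cmult (detm A) (detm B).
Proof. destruct A, B. cexp. ring. Qed.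
Lemma detm_scalar l : detm (scalar_mat l) = Cmult l l.
Proof. cexp. ring. Qed.
Lemma herm_zero_l H v : herm H vzero v = RtoC 0.
Proof. destruct v. unfold vzero. cexp. ring. Qed.
Lemma herm_mv H R u v : herm H u (mv R v) = herm (mm H (cmat R)) u v.
Proof. destruct u, v, H, R. cexp. ring. Qed.
Lemma detm_cmat R : detm (cmat R) = Cconj (detm R).
Proof. destruct R. cexp. reflexivity. Qed.

Lemma unit_inj H R u : signature_pm H -> unitary H R -> u <> vzero -> mv R u <> vzero.
Proof.
  intros HS HU Hu E. apply Hu.
  assert (Z : forall w, herm H u w = RtoC 0).
  { intros w. rewrite <- (HU u w), E. apply herm_zero_l. }
  assert (D : forall w, det2 u w = RtoC 0).
  { intros w. pose proof (gram2_real H u w (proj1 HS)) as G. rewrite !Z in G.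
    pose proof (delta_neg H HS). unfold delta in *.
    replace (nrm (RtoC 0)) with 0 in G by (unfold nrm; simpl; ring).
    rewrite Re_RtoC in G. apply nrm_zero. nra. }
  pose proof (D (Vec (RtoC 1) (RtoC 0))) as D1. pose proof (D (Vec (RtoC 0) (RtoC 1))) as D2.
  destruct u as [u1 u2]. unfold det2 in *; simpl in *. unfold vzero. f_equal.
  - rewrite <- D2. ring.
  - transitivity (Copp (Cminus (Cmult u1 (RtoC 0)) (Cmult u2 (RtoC 1)))). ring. rewrite D1. ring.
Qed.

Lemma unit_cb H R u : signature_pm H -> unitary H R -> closed_ball_pt H u -> closed_ball_pt H (mv R u).
Proof.
  intros HS HU [[N E]|[N E]]; [left|right]; split;
    [apply (unit_inj H); auto | rewrite (HU u u); auto | apply (unit_inj H); auto | rewrite (HU u u); auto].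
Qed.

Lemma unit_neg H R u : signature_pm H -> unitary H R -> negative_pt H u -> negative_pt H (mv R u).
Proof.
  intros HS HU [N E]; split; [apply (unit_inj H); auto | rewrite (HU u u); auto].
Qed.

Lemma RR_scal R s u : mm R R = scalar_mat s -> mv R (mv R u) = scal s u.
Proof. intros E. rewrite <- mv_mm, E, mv_scalar. reflexivity. Qed.

Lemma s_unit H R s : signature_pm H -> unitary H R -> mm R R = scalar_mat s ->
  Cmult s (Cconj s) = RtoC 1.
Proof.
  intros HS HU E. destruct HS as [HH [_ [v Hv]]].
  assert (G : herm H (scal s v) (scal s v) = herm H v v).
  { rewrite <- !(RR_scal R s v E). rewrite !HU. reflexivity. }
  rewrite herm_scal_l, herm_scal_r in G.
  assert (Nz : herm H v v <> RtoC 0) by (intro Z; rewrite Z in Hv; simpl in Hv; lra).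
  apply (Cmult_eq_reg_l (herm H v v)); auto.
  transitivity (Cmult s (Cmult (Cconj s) (herm H v v))). ring. rewrite G. ring.
Qed.

Lemma trace0 R s : mm R R = scalar_mat s -> ~ is_scalar R ->
  m22 R = Copp (m11 R) /\ detm R = Copp s.
Proof.
  intros E NS. destruct R as [a b c d]. unfold mm, scalar_mat in E; cbn [m11 m12 m21 m22] in E.
  pose proof (f_equal m11 E) as E1. pose proof (f_equal m12 E) as E2.
  pose proof (f_equal m21 E) as E3. pose proof (f_equal m22 E) as E4.
  cbn [m11 m12 m21 m22] in E1, E2, E3, E4. clear E. unfold detm; cbn [m11 m12 m21 m22].
  assert (Tr : Cplus a d = RtoC 0).
  { destruct (classic (Cplus a d = RtoC 0)) as [|N]; auto. exfalso. apply NS.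
    assert (b = RtoC 0).
    { apply (Cmult_eq_reg_l (Cplus a d)); auto. transitivity (Cplus (Cmult a b) (Cmult b d)). ring. rewrite E2. ring. }
    assert (c = RtoC 0).
    { apply (Cmult_eq_reg_l (Cplus a d)); auto. transitivity (Cplus (Cmult c a) (Cmult d c)). ring. rewrite E3. ring. }
    subst b c.
    assert (a = d).
    { assert (Cmult (Cplus a d) (Cminus a d) = RtoC 0).
      { transitivity (Cminus (Cplus (Cmult a a) (Cmult (RtoC 0) (RtoC 0))) (Cplus (Cmult (RtoC 0) (RtoC 0)) (Cmult d d))). ring.
        rewrite E1, E4. ring. }
      apply Cmult_integral in H. destruct H as [H|H]; [contradiction|].
      transitivity (Cplus (Cminus a d) d). ring. rewrite H. ring. }
    subst d. exists a. reflexivity. }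
  assert (Ed : d = Copp a) by (transitivity (Cminus (Cplus a d) a); [ring|rewrite Tr; ring]).
  split. exact Ed. subst d. rewrite <- E1. ring.
Qed.

Lemma omega_ex (s : C) : Cmult s (Cconj s) = RtoC 1 ->
  exists w, w <> RtoC 0 /\ Cconj w = Cmult s w.
Proof.
  intros Hs. destruct (classic (s = Copp (RtoC 1))) as [E|N].
  - exists Ci. split. intro Z. inversion Z. lra.
    subst s. unfold Ci, Cconj, Cmult, Copp, RtoC; simpl. f_equal; ring.
  - exists (Cplus (RtoC 1) (Cconj s)). split.
    + intro Z. apply N. rewrite <- (Cconj_conj s).
      assert (Cconj s = Copp (RtoC 1)) by (transitivity (Cminus (Cplus (RtoC 1) (Cconj s)) (RtoC 1)); [ring|rewrite Z; ring]).
      rewrite H, Copp_conj, conj_R. reflexivity.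
    + rewrite Cplus_conj, Cconj_conj, conj_R.
      transitivity (Cplus s (Cmult s (Cconj s))). rewrite Hs. ring. ring.
Qed.

Lemma Rsym H R s a b : unitary H R -> mm R R = scalar_mat s ->
  herm H (mv R b) a = Cmult s (herm H b (mv R a)).
Proof.
  intros HU E. rewrite <- (HU (mv R b) a). rewrite (RR_scal R s b E). apply herm_scal_l.
Qed.

Definition Phi (H R : mat) (w : C) (a b : vec) : C := Cmult (Cconj w) (herm H a (mv R b)).

Lemma Phi_sym H R s w a b : hermitian_mat H -> unitary H R -> mm R R = scalar_mat s ->
  Cconj w = Cmult s w -> Phi H R w b a = Cconj (Phi H R w a b).
Proof.
  intros HH HU E Hw. unfold Phi. rewrite Cmult_conj, Cconj_conj.
  rewrite <- (herm_sym H a (mv R b) HH). rewrite (Rsym H R s a b HU E). rewrite Hw. ring.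
Qed.

Lemma Phi_real H R s w a : hermitian_mat H -> unitary H R -> mm R R = scalar_mat s ->
  Cconj w = Cmult s w -> Phi H R w a a = RtoC (Re (Phi H R w a a)).
Proof. intros. apply C_eq_conj_real. apply (Phi_sym H R s); auto. Qed.

Lemma Phi_gram H R s w a b : signature_pm H -> unitary H R -> mm R R = scalar_mat s ->
  ~ is_scalar R -> Cconj w = Cmult s w ->
  Re (Phi H R w a a) * Re (Phi H R w b b) - nrm (Phi H R w a b) =
  - (nrm w * nrm (det2 a b) * delta H).
Proof.
  intros HS HU E NS Hw. pose proof (proj1 HS) as HH.
  pose proof (s_unit H R s HS HU E) as Hs. destruct (trace0 R s E NS) as [_ Dt].
  assert (G : Cminus (Cmult (Phi H R w a a) (Phi H R w b b)) (Cmult (Phi H R w a b) (Phi H R w b a)) =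
              Copp (Cmult (Cmult (Cmult w (Cconj w)) (Cmult (det2 a b) (Cconj (det2 a b)))) (detm H))).
  { unfold Phi. rewrite !herm_mv.
    transitivity (Cmult (Cmult (Cconj w) (Cconj w)) (Cminus (Cmult (herm (mm H (cmat R)) a a) (herm (mm H (cmat R)) b b))
        (Cmult (herm (mm H (cmat R)) a b) (herm (mm H (cmat R)) b a)))). ring.
    rewrite gram2, detm_mm, detm_cmat, Dt, Copp_conj.
    transitivity (Copp (Cmult (Cmult (Cmult (Cconj w) (Cmult s w)) (Cconj s)) (Cmult (Cmult (det2 a b) (Cconj (det2 a b))) (detm H)))).
    rewrite <- Hw. ring.
    transitivity (Copp (Cmult (Cmult (Cmult (Cconj w) w) (Cmult s (Cconj s))) (Cmult (Cmult (det2 a b) (Cconj (det2 a b))) (detm H)))).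
    ring. rewrite Hs. ring. }
  rewrite (Phi_sym H R s w a b HH HU E Hw) in G.
  rewrite (Phi_real H R s w a HH HU E Hw), (Phi_real H R s w b HH HU E Hw) in G.
  rewrite !mult_conj_nrm, (detm_herm H HH) in G. unfold delta.
  revert G. generalize (Re (Phi H R w a a)) (Re (Phi H R w b b)) (nrm (Phi H R w a b)) (nrm w) (nrm (det2 a b)) (Re (detm H)).
  intros x y z t u v G. apply (f_equal fst) in G. simpl in G. lra.
Qed.

Lemma Phi_pos H R s w a b : signature_pm H -> unitary H R -> mm R R = scalar_mat s ->
  ~ is_scalar R -> w <> RtoC 0 -> Cconj w = Cmult s w -> a <> vzero -> b <> vzero ->
  0 < Re (Phi H R w a a) * Re (Phi H R w b b).
Proof.
  intros HS HU E NS Hw0 Hw Ha Hb.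
  pose proof (delta_neg H HS) as Dn. pose proof (nrm_pos w Hw0) as Wp.
  assert (NZ : forall x, x <> vzero -> Re (Phi H R w x x) <> 0).
  { intros x Hx Z. apply vec_nz_iff in Hx.
    assert (exists y, det2 x y <> RtoC 0) as [y Hy].
    { destruct x as [x1 x2]; simpl in Hx. destruct Hx as [Hx|Hx].
      - exists (Vec (RtoC 0) (RtoC 1)). unfold det2; simpl.
        replace (Cminus (Cmult x1 (RtoC 1)) (Cmult x2 (RtoC 0))) with x1 by ring. auto.
      - exists (Vec (RtoC 1) (RtoC 0)). unfold det2; simpl. intro Z'. apply Hx.
        transitivity (Copp (Cminus (Cmult x1 (RtoC 0)) (Cmult x2 (RtoC 1)))). ring. rewrite Z'. ring. }
    pose proof (Phi_gram H R s w x y HS HU E NS Hw) as G. rewrite Z in G.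
    pose proof (nrm_pos _ Hy). pose proof (nrm_ge0 (Phi H R w x y)).
    assert (0 < nrm w * nrm (det2 x y)) by (apply Rmult_lt_0_compat; auto). nra. }
  pose proof (Phi_gram H R s w a b HS HU E NS Hw) as G.
  pose proof (NZ a Ha). pose proof (NZ b Hb). pose proof (nrm_ge0 (Phi H R w a b)).
  pose proof (nrm_ge0 (det2 a b)). unfold delta in *.
  assert (0 <= nrm w * nrm (det2 a b)) by (apply Rmult_le_pos; lra).
  assert (Hp : 0 <= Re (Phi H R w a a) * Re (Phi H R w b b)) by nra.
  destruct (Rle_lt_or_eq_dec _ _ Hp) as [|Z]; auto.
  symmetry in Z. apply Rmult_integral in Z. destruct Z; contradiction.
Qed.

Lemma ratio_lemma (T1 T2 : C) (p q : R) : p <> 0 ->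
  Cmult T1 (RtoC p) = Cmult T2 (RtoC q) -> T1 = Cmult (RtoC (q/p)) T2.
Proof.
  intros Hp E. destruct T1 as [a b], T2 as [c d]. unfold Cmult, RtoC in *; simpl in *.
  injection E as E1 E2. f_equal.
  - replace a with ((a * p - b * 0) / p) by (field; auto). rewrite E1. field; auto.
  - replace b with ((a * 0 + b * p) / p) by (field; auto). rewrite E2. field; auto.
Qed.

Lemma key_half H R s o a : signature_pm H -> unitary H R -> mm R R = scalar_mat s ->
  ~ is_scalar R -> negative_pt H o -> closed_ball_pt H a ->
  area_tri H o a (mv R a) = area_tri H o a (mv R o).
Proof.
  intros HS HU E NS Ho Ha. pose proof (proj1 HS) as HH.
  pose proof (s_unit H R s HS HU E) as Hs. destruct (omega_ex s Hs) as [w [Hw0 Hw]].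
  assert (Hoz : o <> vzero) by apply Ho.
  assert (Haz := cb_nz H a Ha).
  pose proof (Phi_pos H R s w o a HS HU E NS Hw0 Hw Hoz Haz) as PP.
  assert (PaNZ : Re (Phi H R w a a) <> 0).
  { intro Z. rewrite Z in PP. lra. }
  assert (HRo := unit_neg H R o HS HU Ho).
  assert (ND1 : ~ (EI H o a \/ EI H a (mv R a) \/ EI H (mv R a) o)).
  { intros [D|[D|D]].
    - apply (EI_neg_l H o a Ho D).
    - destruct D as [I S]. apply sp_sym in S. apply same_point_scal in S. destruct S as [l [Hl El]].
      fold (scal l a) in El. apply PaNZ. unfold Phi. rewrite El, herm_scal_r. destruct I as [_ I]. rewrite I.
      replace (Cmult (Cconj w) (Cmult (Cconj l) (RtoC 0))) with (RtoC 0) by ring. reflexivity.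
    - apply (EI_neg_r H o _ HH Ho D). }
  assert (ND2 : ~ (EI H o a \/ EI H a (mv R o) \/ EI H (mv R o) o)).
  { intros [D|[D|D]].
    - apply (EI_neg_l H o a Ho D).
    - apply EI_sym in D; auto. apply (EI_neg_l H _ a HRo D).
    - apply (EI_neg_l H _ o HRo D). }
  rewrite !A_nd; auto. f_equal.
  assert (Rel : Cmult (Tri H o a (mv R a)) (Phi H R w o o) = Cmult (Tri H o a (mv R o)) (Phi H R w a a)).
  { pose proof (Phi_sym H R s w o o HH HU E Hw) as PR. unfold Phi in *.
    unfold Tri. rewrite (Rsym H R s o a HU E). rewrite (herm_sym H o (mv R o) HH).
    set (X := herm H o (mv R o)) in *.
    rewrite Cmult_conj, Cconj_conj in PR.
    transitivity (Cmult (Copp (Cmult (Cmult (herm H o a) (herm H a (mv R a))) (herm H a (mv R o)))) (Cmult s (Cmult (Cconj w) X))). ring.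
    rewrite PR.
    transitivity (Cmult (Copp (Cmult (Cmult (herm H o a) (herm H a (mv R a))) (herm H a (mv R o)))) (Cmult (Cmult s w) (Cconj X))). ring.
    rewrite <- Hw. ring. }
  rewrite (Phi_real H R s w o HH HU E Hw), (Phi_real H R s w a HH HU E Hw) in Rel.
  assert (Eq : Tri H o a (mv R a) = Cmult (RtoC (Re (Phi H R w a a) / Re (Phi H R w o o))) (Tri H o a (mv R o))).
  { assert (Po : Re (Phi H R w o o) <> 0) by (intro Z; rewrite Z in PP; lra).
    apply ratio_lemma; auto. }
  rewrite Eq, arg_scale; auto.
  unfold Rdiv. replace (Re (Phi H R w a a) * / Re (Phi H R w o o)) with
    (Re (Phi H R w o o) * Re (Phi H R w a a) / (Re (Phi H R w o o) * Re (Phi H R w o o)))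
    by (field; intro Z; rewrite Z in PP; lra).
  apply Rdiv_lt_0_compat; auto.
  assert (Re (Phi H R w o o) <> 0) by (intro Z; rewrite Z in PP; lra). nra.
Qed.

Lemma sign_lemma H R s a : signature_pm H -> unitary H R -> mm R R = scalar_mat s ->
  ~ is_scalar R -> a <> vzero ->
  exists r, 0 < r /\
    Cmult (Cmult (herm H a (mv R a)) (herm H a (mv R a))) (detm R) = RtoC (- r).
Proof.
  intros HS HU E NS Ha. pose proof (proj1 HS) as HH.
  pose proof (s_unit H R s HS HU E) as Hs. destruct (omega_ex s Hs) as [w [Hw0 Hw]].
  pose proof (Phi_pos H R s w a a HS HU E NS Hw0 Hw Ha Ha) as PP.
  pose proof (Phi_real H R s w a HH HU E Hw) as PR.
  destruct (trace0 R s E NS) as [_ Dt].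
  set (phi := Re (Phi H R w a a)) in *.
  pose proof (nrm_pos w Hw0) as Wp.
  exists (phi * phi / nrm w). split. apply Rdiv_lt_0_compat; auto.
  rewrite Dt. unfold Phi in PR. set (h := herm H a (mv R a)) in *.
  apply (Cmult_eq_reg_l (Cmult w (Cconj w))).
  2:{ rewrite mult_conj_nrm. intro Z. apply (f_equal fst) in Z. simpl in Z. lra. }
  transitivity (Copp (Cmult (Cmult (Cconj w) h) (Cmult (Cmult s w) h))). ring.
  rewrite <- Hw, PR, mult_conj_nrm. clearbody phi h. clear PR.
  unfold RtoC, Cmult, Copp; simpl. f_equal; field; lra.
Qed.

Definition vsub (x y : vec) : vec := Vec (Cminus (v1 x) (v1 y)) (Cminus (v2 x) (v2 y)).

Lemma mv_vsub R x y : mv R (vsub x y) = vsub (mv R x) (mv R y).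
Proof. destruct x, y. unfold vsub. cexp. f_equal; ring. Qed.

Lemma vsub_zero x y : vsub x y = vzero -> x = y.
Proof.
  destruct x as [a b], y as [c d]. unfold vsub, vzero. intros E.
  pose proof (f_equal v1 E) as E1. pose proof (f_equal v2 E) as E2. cbn [v1 v2] in E1, E2. f_equal.
  - transitivity (Cplus (Cminus a c) c). ring. rewrite E1. ring.
  - transitivity (Cplus (Cminus b d) d). ring. rewrite E2. ring.
Qed.

Lemma mv_zero R : mv R vzero = vzero.
Proof. unfold vzero. cexp. f_equal; ring. Qed.

Lemma sp_unit H R x y : signature_pm H -> unitary H R ->
  (same_point (mv R x) (mv R y) <-> same_point x y).
Proof.
  intros HS HU. rewrite !same_point_scal. split; intros [l [Hl E]]; exists l; split; auto.
  - rewrite <- mv_scal in E. apply vsub_zero.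
    destruct (classic (vsub x (scal l y) = vzero)) as [Z|N]; auto.
    exfalso. apply (unit_inj H R _ HS HU N). rewrite mv_vsub, E.
    destruct (mv R (scal l y)). unfold vsub, vzero; simpl. f_equal; ring.
  - rewrite E, mv_scal. reflexivity.
Qed.

Lemma iso_unit H R x : signature_pm H -> unitary H R ->
  (isotropic_pt H (mv R x) <-> isotropic_pt H x).
Proof.
  intros HS HU. unfold isotropic_pt. rewrite (HU x x). split; intros [N E]; split; auto.
  - intro Z. apply N. rewrite Z. apply mv_zero.
  - apply (unit_inj H); auto.
Qed.

Lemma EI_unit H R x y : signature_pm H -> unitary H R -> (EI H (mv R x) (mv R y) <-> EI H x y).
Proof. intros HS HU. unfold EI. rewrite (iso_unit H R x HS HU), (sp_unit H R x y HS HU). tauto. Qed.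

Lemma A_unit H R x y z : signature_pm H -> unitary H R ->
  area_tri H (mv R x) (mv R y) (mv R z) = area_tri H x y z.
Proof.
  intros HS HU. destruct (A_cases H x y z) as [D|D].
  - rewrite !A_deg; auto. rewrite !EI_unit; auto.
  - rewrite !A_nd. unfold Tri. rewrite !HU. reflexivity. auto. rewrite !EI_unit; auto.
Qed.

Lemma quad H R o a b : signature_pm H -> unitary H R -> is_scalar (mm R R) ->
  negative_pt H o -> closed_ball_pt H a -> closed_ball_pt H b ->
  area_tri H o a (mv R a) + area_tri H o (mv R a) (mv R b) + area_tri H o (mv R b) b
  + area_tri H o b a = 0.
Proof.
  intros HS HU [s E] Ho Ha Hb. pose proof (proj1 HS) as HH.
  assert (Ob : closed_ball_pt H o) by (left; auto).
  destruct (classic (is_scalar R)) as [[mu Em]|NS].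
  - assert (Sm : forall x, mv R x = scal mu x) by (intros; rewrite Em; apply mv_scalar).
    assert (Hmu : mu <> RtoC 0).
    { intro Z. apply (unit_inj H R a HS HU (cb_nz H a Ha)). rewrite Sm, Z.
      unfold scal, vzero. f_equal; ring. }
    rewrite !Sm. rewrite A_scal3, A_scal2, A_scal3, A_scal2 by auto.
    rewrite (A_self H o a HS (cb_re H a Ha)), (A_self H o b HS (cb_re H b Hb)).
    rewrite (A_swap H o a b HS Ob Ha Hb). ring.
  - pose proof (s_unit H R s HS HU E) as Hs.
    assert (Hs0 : s <> RtoC 0) by (intro Z; rewrite Z in Hs; apply C1_neq0; rewrite <- Hs; ring).
    rewrite <- (A_unit H R o (mv R a) (mv R b) HS HU).
    rewrite (RR_scal R s a E), (RR_scal R s b E), A_scal2, A_scal3 by auto.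
    assert (HRo : closed_ball_pt H (mv R o)) by (apply unit_cb; auto).
    rewrite (cocycle H o (mv R o) a b HS Ho HRo Ha Hb).
    rewrite (A_swap H o a (mv R o) HS Ob Ha HRo).
    rewrite <- (key_half H R s o a HS HU E NS Ho Ha).
    rewrite <- (key_half H R s o b HS HU E NS Ho Hb).
    rewrite (A_swap H o b (mv R b) HS Ob Hb (unit_cb H R b HS HU Hb)).
    rewrite (A_swap H o a b HS Ob Ha Hb). ring.
Qed.


Lemma orbit_prod Rl p k : orbit_pts Rl p k = mv (prod_lifts Rl k) p.
Proof.
  induction k; simpl. rewrite mv_scalar. destruct p. unfold scal; simpl. f_equal; ring.
  rewrite IHk, mv_mm. reflexivity.
Qed.

Lemma orbit_cb H n Rl p k : signature_pm H -> is_Hn_rep H n Rl -> closed_ball_pt H p ->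
  (k <= n)%nat -> closed_ball_pt H (orbit_pts Rl p k).
Proof.
  intros HS [HU _] Hp. induction k; intros Hk; simpl; auto.
  apply unit_cb; auto. apply HU; lia. apply IHk; lia.
Qed.

Lemma orbit_neg H n Rl p k : signature_pm H -> is_Hn_rep H n Rl -> negative_pt H p ->
  (k <= n)%nat -> negative_pt H (orbit_pts Rl p k).
Proof.
  intros HS [HU _] Hp. induction k; intros Hk; simpl; auto.
  apply unit_neg; auto. apply HU; lia. apply IHk; lia.
Qed.

Definition chain (ps : nat -> vec) (n j : nat) : vec :=
  if Nat.eqb j n then ps 1%nat else ps (S j).

Lemma area_chain H c ps n :
  area_poly H c ps n = sumB (fun j => area_tri H c (chain ps n j) (chain ps n (S j))) n.
Proof.
  unfold area_poly. rewrite fold_seq. apply sumB_ext. intros j Hj.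
  change (1 + j)%nat with (S j). cbv beta. unfold chain. replace (Nat.eqb j n) with false by (symmetry; apply Nat.eqb_neq; lia).
  destruct (Nat.eqb (S j) n); reflexivity.
Qed.

Lemma chain_cb H n ps j : (forall k, (1 <= k <= n)%nat -> closed_ball_pt H (ps k)) ->
  (1 <= n)%nat -> (j <= n)%nat -> closed_ball_pt H (chain ps n j).
Proof.
  intros Hk H1 Hj. unfold chain. destruct (Nat.eqb j n) eqn:E. apply Hk; lia.
  apply Nat.eqb_neq in E. apply Hk; lia.
Qed.

Lemma chain_0n ps n : (1 <= n)%nat -> chain ps n 0 = chain ps n n.
Proof.
  intros Hn. unfold chain. rewrite Nat.eqb_refl.
  replace (Nat.eqb 0 n) with false by (symmetry; apply Nat.eqb_neq; lia). reflexivity.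
Qed.

Lemma center_change H o c x n : signature_pm H -> negative_pt H o -> closed_ball_pt H c ->
  (forall j, (j <= n)%nat -> closed_ball_pt H (x j)) -> x O = x n ->
  sumB (fun j => area_tri H c (x j) (x (S j))) n = sumB (fun j => area_tri H o (x j) (x (S j))) n.
Proof.
  intros HS Ho Hc Hx E0.
  assert (Ob : closed_ball_pt H o) by (left; auto).
  transitivity (sumB (fun j => area_tri H o (x j) (x (S j)) +
      (area_tri H o c (x j) - area_tri H o c (x (S j)))) n).
  - apply sumB_ext. intros j Hj.
    rewrite (cocycle H o c (x j) (x (S j)) HS Ho Hc (Hx j ltac:(lia)) (Hx (S j) ltac:(lia))).
    rewrite (A_swap H o c (x (S j)) HS Ob Hc (Hx (S j) ltac:(lia))). ring.
  - rewrite sumB_plus. rewrite (sumB_telescope (fun j => area_tri H o c (x j))). rewrite E0. ring.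
Qed.

Lemma quad_diff H R o a b : signature_pm H -> unitary H R -> is_scalar (mm R R) ->
  negative_pt H o -> closed_ball_pt H a -> closed_ball_pt H b ->
  area_tri H o a (mv R a) - area_tri H o b (mv R b) = area_tri H o a b - area_tri H o (mv R a) (mv R b).
Proof.
  intros HS HU HR Ho Ha Hb. pose proof (quad H R o a b HS HU HR Ho Ha Hb) as Q.
  assert (Ob : closed_ball_pt H o) by (left; auto).
  rewrite (A_swap H o b (mv R b) HS Ob Hb (unit_cb H R b HS HU Hb)) in Q.
  rewrite (A_swap H o a b HS Ob Ha Hb) in Q. lra.
Qed.

Lemma lambda_ex H n Rl : is_Hn_rep H n Rl -> exists l, forall p, orbit_pts Rl p n = scal l p.
Proof.
  intros [_ [_ [l E]]]. exists l. intros p. rewrite orbit_prod, E, mv_scalar. reflexivity.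
Qed.

Lemma lambda_nz H n Rl l p : signature_pm H -> is_Hn_rep H n Rl -> closed_ball_pt H p ->
  orbit_pts Rl p n = scal l p -> l <> RtoC 0.
Proof.
  intros HS Hr Hp E Z. apply (cb_nz H (orbit_pts Rl p n)). apply (orbit_cb H n); auto.
  rewrite E, Z. unfold scal, vzero. f_equal; ring.
Qed.

Lemma base_indep H n Rl o p q : signature_pm H -> (1 <= n)%nat -> is_Hn_rep H n Rl ->
  negative_pt H o -> closed_ball_pt H p -> closed_ball_pt H q ->
  sumB (fun j => area_tri H o (chain (orbit_pts Rl p) n j) (chain (orbit_pts Rl p) n (S j))) n =
  sumB (fun j => area_tri H o (chain (orbit_pts Rl q) n j) (chain (orbit_pts Rl q) n (S j))) n.
Proof.
  intros HS Hn Hr Ho Hp Hq. pose proof (proj1 HS) as HH.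
  set (x := chain (orbit_pts Rl p) n). set (y := chain (orbit_pts Rl q) n).
  set (h := fun j => area_tri H o (x j) (y j)).
  destruct (lambda_ex H n Rl Hr) as [l El].
  assert (Hl : l <> RtoC 0) by (apply (lambda_nz H n Rl l p); auto).
  destruct Hr as [HU [HRR Hprod]].
  transitivity (sumB (fun j => area_tri H o (y j) (y (S j)) + (h j - h (S j))) n).
  - apply sumB_ext. intros j Hj. unfold h, x, y, chain.
    replace (Nat.eqb j n) with false by (symmetry; apply Nat.eqb_neq; lia).
    destruct (Nat.eqb (S j) n) eqn:Ej.
    + apply Nat.eqb_eq in Ej. subst n.
      assert (Ep : orbit_pts Rl p (S j) = scal l p) by apply El.
      assert (Eq : orbit_pts Rl q (S j) = scal l q) by apply El.
      rewrite Ep, Eq. simpl.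
      rewrite (A_scal2 H l o p), (A_scal2 H l o q), (A_scal2 H l o p), (A_scal3 H l o p q) by auto.
      pose proof (quad_diff H (Rl 1%nat) o p q HS (HU 1%nat ltac:(lia)) (HRR 1%nat ltac:(lia)) Ho Hp Hq).
      lra.
    + apply Nat.eqb_neq in Ej.
      change (orbit_pts Rl p (S (S j))) with (mv (Rl (S (S j))) (orbit_pts Rl p (S j))).
      change (orbit_pts Rl q (S (S j))) with (mv (Rl (S (S j))) (orbit_pts Rl q (S j))).
      pose proof (quad_diff H (Rl (S (S j))) o (orbit_pts Rl p (S j)) (orbit_pts Rl q (S j)) HS
        (HU (S (S j)) ltac:(lia)) (HRR (S (S j)) ltac:(lia)) Ho
        (orbit_cb H n Rl p (S j) HS (conj HU (conj HRR Hprod)) Hp ltac:(lia))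
        (orbit_cb H n Rl q (S j) HS (conj HU (conj HRR Hprod)) Hq ltac:(lia))).
      lra.
  - rewrite sumB_plus, sumB_telescope. unfold h, x, y. rewrite !(chain_0n _ n Hn). ring.
Qed.

Lemma neg_exists H : signature_pm H -> exists o, negative_pt H o.
Proof.
  intros [_ [_ [v Hv]]]. exists v. split; auto. intro Z. subst v.
  rewrite herm_zero_l in Hv. simpl in Hv. lra.
Qed.

Lemma area_center H n Rl c o p : signature_pm H -> (1 <= n)%nat -> is_Hn_rep H n Rl ->
  negative_pt H o -> closed_ball_pt H c -> closed_ball_pt H p ->
  area_rho H n Rl c p =
  sumB (fun j => area_tri H o (chain (orbit_pts Rl p) n j) (chain (orbit_pts Rl p) n (S j))) n.
Proof.
  intros HS Hn Hr Ho Hc Hp. unfold area_rho. rewrite area_chain.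
  apply center_change; auto.
  - intros j Hj. apply chain_cb; auto. intros k Hk. apply (orbit_cb H n); auto; lia.
  - apply chain_0n; auto.
Qed.

Lemma part1 H n Rl : signature_pm H -> (5 <= n)%nat -> is_Hn_rep H n Rl ->
  forall p p' c c' : vec,
    closed_ball_pt H p -> closed_ball_pt H p' ->
    closed_ball_pt H c -> closed_ball_pt H c' ->
    area_rho H n Rl c p = area_rho H n Rl c' p'.
Proof.
  intros HS Hn Hr p p' c c' Hp Hp' Hc Hc'. destruct (neg_exists H HS) as [o Ho].
  rewrite (area_center H n Rl c o p), (area_center H n Rl c' o p') by (auto; lia).
  apply base_indep; auto. lia.
Qed.

Lemma chain_prod H o (x : nat -> vec) m : hermitian_mat H ->
  (forall j, (j <= m)%nat -> herm H o (x j) <> RtoC 0) ->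
  exists r, 0 < r /\
  Cmult (prodB (fun j => Tri H o (x j) (x (S j))) m) (herm H o (x m)) =
  Cmult (RtoC ((-1)^m * r)) (Cmult (herm H o (x O)) (prodB (fun j => herm H (x j) (x (S j))) m)).
Proof.
  intros HH. induction m; intros Hz.
  - exists 1. split. lra. simpl. rewrite RtoC_mult. ring.
  - destruct IHm as [r [Hr IH]]. intros; apply Hz; lia.
    exists (r * nrm (herm H o (x (S m)))). split.
    apply Rmult_lt_0_compat; auto. apply nrm_pos; apply Hz; lia.
    simpl prodB.
    transitivity (Copp (Cmult (Cmult (Cmult (prodB (fun j => Tri H o (x j) (x (S j))) m) (herm H o (x m)))
       (herm H (x m) (x (S m)))) (Cmult (herm H o (x (S m))) (Cconj (herm H o (x (S m))))))).
    { unfold Tri at 2. rewrite (herm_sym H o (x (S m)) HH). ring. }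
    rewrite IH, mult_conj_nrm. simpl pow. rewrite !RtoC_mult. replace (RtoC (-1)) with (Copp (RtoC 1)) by (unfold RtoC, Copp; simpl; f_equal; ring). ring.
Qed.

Lemma RtoC_m1 : RtoC (-1) = Copp (RtoC 1).
Proof. unfold RtoC, Copp; simpl. f_equal; ring. Qed.

Lemma sign_prod H n Rl p m : signature_pm H -> is_Hn_rep H n Rl -> negative_pt H p ->
  (forall i, (1 <= i <= n)%nat -> ~ is_scalar (Rl i)) -> (m <= n)%nat ->
  exists r, 0 < r /\
  Cmult (Cmult (prodB (fun k => herm H (orbit_pts Rl p k) (mv (Rl (S k)) (orbit_pts Rl p k))) m)
               (prodB (fun k => herm H (orbit_pts Rl p k) (mv (Rl (S k)) (orbit_pts Rl p k))) m))
        (detm (prod_lifts Rl m)) = RtoC ((-1)^m * r).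
Proof.
  intros HS Hr Hp NS. induction m; intros Hm.
  - exists 1. split. lra. simpl. rewrite detm_scalar, RtoC_mult. ring.
  - destruct IHm as [r [Hr0 IH]]. lia.
    destruct Hr as [HU [HRR Hpr]].
    destruct (HRR (S m) ltac:(lia)) as [s Es].
    destruct (sign_lemma H (Rl (S m)) s (orbit_pts Rl p m) HS (HU (S m) ltac:(lia)) Es (NS (S m) ltac:(lia))) as [r' [Hr' E']].
    { apply (orbit_neg H n Rl p m HS (conj HU (conj HRR Hpr)) Hp). lia. }
    exists (r * r'). split. apply Rmult_lt_0_compat; auto.
    simpl prodB. simpl prod_lifts. rewrite detm_mm.
    set (P := prodB (fun k => herm H (orbit_pts Rl p k) (mv (Rl (S k)) (orbit_pts Rl p k))) m) in *.
    set (h := herm H (orbit_pts Rl p m) (mv (Rl (S m)) (orbit_pts Rl p m))) in *.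
    transitivity (Cmult (Cmult (Cmult P P) (detm (prod_lifts Rl m))) (Cmult (Cmult h h) (detm (Rl (S m))))). ring.
    rewrite IH, E'. simpl pow. rewrite !RtoC_mult, !RtoC_opp, RtoC_m1. ring.
Qed.

Lemma Tri_nz H a b c : herm H a b <> RtoC 0 -> herm H b c <> RtoC 0 -> herm H c a <> RtoC 0 ->
  Tri H a b c <> RtoC 0.
Proof.
  intros H1 H2 H3 Z. unfold Tri in Z.
  assert (Z' : Cmult (Cmult (herm H a b) (herm H b c)) (herm H c a) = RtoC 0).
  { transitivity (Copp (Copp (Cmult (Cmult (herm H a b) (herm H b c)) (herm H c a)))). ring.
    rewrite Z. ring. }
  revert Z'. apply Cmult_neq0; auto. apply Cmult_neq0; auto.
Qed.

Lemma neg_herm_nz H a b : signature_pm H -> negative_pt H a -> negative_pt H b -> herm H a b <> RtoC 0.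
Proof.
  intros HS Ha Hb. apply herm_nz; auto; try (left; auto). apply EI_neg_l; auto.
Qed.

Lemma part2 H n Rl : signature_pm H -> (5 <= n)%nat -> is_Hn_rep H n Rl ->
  (forall i, (1 <= i <= n)%nat -> ~ is_scalar (Rl i)) ->
  forall p c : vec, closed_ball_pt H p -> closed_ball_pt H c ->
    exists k : Z, area_rho H n Rl c p = INR n * PI + 2 * IZR k * PI.
Proof.
  intros HS Hn Hr NS p c Hp Hc. pose proof (proj1 HS) as HH.
  destruct (neg_exists H HS) as [o Ho].
  assert (Ob : closed_ball_pt H o) by (left; auto).
  rewrite (part1 H n Rl HS Hn Hr p o c o Hp Ob Hc Ob).
  unfold area_rho. rewrite area_chain.
  set (ps := orbit_pts Rl o). set (x := chain ps n).
  assert (Xn : forall j, (j <= n)%nat -> negative_pt H (x j)).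
  { intros j Hj. unfold x, chain. destruct (Nat.eqb j n) eqn:E.
    - apply (orbit_neg H n); auto; lia.
    - apply Nat.eqb_neq in E. apply (orbit_neg H n); auto; lia. }
  set (T := fun j => Tri H o (x j) (x (S j))).
  assert (TNZ : forall j, (j < n)%nat -> T j <> RtoC 0).
  { intros j Hj. unfold T. apply Tri_nz; apply neg_herm_nz; auto; apply Xn; lia. }
  assert (E1 : sumB (fun j => area_tri H o (x j) (x (S j))) n = 2 * sumB (fun j => arg (T j)) n).
  { rewrite <- sumB_scal. apply sumB_ext. intros j Hj. unfold T. apply A_nd.
    intros [D|[D|D]].
    - apply (EI_neg_l H o _ Ho D).
    - apply (EI_neg_l H (x j) _ (Xn j ltac:(lia)) D).
    - apply (EI_neg_l H (x (S j)) _ (Xn (S j) ltac:(lia)) D). }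
  rewrite E1.
  destruct (arg_sum T n TNZ) as [k1 K1]. rewrite K1.
  destruct (chain_prod H o x n HH) as [r [Hr0 CP]].
  { intros j Hj. apply neg_herm_nz; auto. }
  fold T in CP.
  assert (X0 : x O = x n) by (apply chain_0n; lia).
  rewrite <- X0 in CP.
  set (Q := prodB (fun j => herm H (x j) (x (S j))) n) in *.
  assert (PQ : prodB T n = Cmult (RtoC ((-1)^n * r)) Q).
  { apply (Cmult_eq_reg_l (herm H o (x O))).
    rewrite Cmult_comm, CP. ring. apply neg_herm_nz; auto. apply Xn; lia. }
  destruct Hr as [HU [HRR [l El]]].
  set (h := fun k => herm H (ps k) (mv (Rl (S k)) (ps k))).
  assert (Epn : ps n = scal l o) by (unfold ps; rewrite orbit_prod, El, mv_scalar; reflexivity).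
  assert (QE : Q = Cmult l (prodB h n)).
  { destruct n as [|m]. lia. unfold Q. simpl prodB at 1. rewrite prodB_shift.
    assert (G : prodB (fun j => herm H (x j) (x (S j))) m = prodB (fun j => h (S j)) m).
    { apply prodB_ext. intros j Hj. unfold x, chain, h.
      replace (Nat.eqb j (S m)) with false by (symmetry; apply Nat.eqb_neq; lia).
      replace (Nat.eqb (S j) (S m)) with false by (symmetry; apply Nat.eqb_neq; lia).
      reflexivity. }
    rewrite G.
    assert (Gm : herm H (x m) (x (S m)) = Cmult l (h O)).
    { unfold x, chain. replace (Nat.eqb m (S m)) with false by (symmetry; apply Nat.eqb_neq; lia).
      rewrite Nat.eqb_refl. rewrite Epn. unfold h. rewrite herm_scal_l. reflexivity. }
    rewrite Gm. ring. }
  destruct (sign_prod H n Rl o n HS (conj HU (conj HRR (ex_intro _ l El))) Ho NS (le_n n)) as [r2 [Hr2 SP]].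
  fold ps in SP. fold h in SP. rewrite El, detm_scalar in SP.
  assert (SQ : Cmult (prodB T n) (prodB T n) = RtoC ((-1)^n * (r * r * r2))).
  { rewrite PQ, QE.
    transitivity (Cmult (Cmult (RtoC ((-1)^n * r)) (RtoC ((-1)^n * r)))
       (Cmult (Cmult (prodB h n) (prodB h n)) (Cmult l l))). ring.
    rewrite SP, <- !RtoC_mult. f_equal.
    assert (E2 : (-1)^n * (-1)^n = 1).
    { rewrite <- Rpow_mult_distr. replace (-1 * -1) with 1 by ring. apply pow1. }
    transitivity ((-1)^n * (-1)^n * ((-1)^n * (r * r * r2))). ring. rewrite E2. ring. }
  destruct (arg_sq (prodB T n) n (r * r * r2)) as [k2 K2]; auto.
  { apply prodB_neq0. auto. }
  { apply Rmult_lt_0_compat; auto. apply Rmult_lt_0_compat; auto. }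
  exists (k2 + 2 * k1)%Z. rewrite plus_IZR, mult_IZR.
  replace (2 * (arg (prodB T n) + 2 * IZR k1 * PI)) with (2 * arg (prodB T n) + 4 * (IZR k1 * PI)) by ring.
  rewrite K2. simpl (IZR 2). ring.
Qed.

Theorem lemma3p2 :
  forall (H : mat) (n : nat) (Rl : nat -> mat),
    signature_pm H ->
    (5 <= n)%nat ->
    is_Hn_rep H n Rl ->
    (forall p p' c c' : vec,
        closed_ball_pt H p -> closed_ball_pt H p' ->
        closed_ball_pt H c -> closed_ball_pt H c' ->
        area_rho H n Rl c p = area_rho H n Rl c' p') /\
    ((forall i, (1 <= i <= n)%nat -> ~ is_scalar (Rl i)) ->
     forall p c : vec, closed_ball_pt H p -> closed_ball_pt H c ->
       exists k : Z, area_rho H n Rl c p = INR n * PI + 2 * IZR k * PI).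
Proof.
  intros H n Rl HS Hn Hr. split.
  - apply part1; auto.
  - intros NS. apply part2; auto.
Qed.
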